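(* Let $\beta>0$ and $\gamma>0$ be real numbers. A $2\times 2$ table $P=\begin{pmatrix} p_{00} & p_{01}\\ p_{10} & p_{11}\end{pmatrix}$ (i.e. $p_{ij}>0$ for all $i,j\in\{0,1\}$ and $p_{00}+p_{01}+p_{10}+p_{11}=1$) satisfies \[ \frac{p_{00}p_{10}}{p_{01}p_{11}}=\beta^2 \quad\text{and}\quad \frac{p_{00}p_{01}}{p_{10}p_{11}}=\gamma^2 \] if and only if there exists a real number $v$ with $0<v<\frac{1}{\beta+\gamma}$ such that \[ P=\begin{pmatrix} \frac{\beta}{\beta+\frac{1}{\gamma}}\,[1-(\beta+\gamma)v] & \gamma v\\ \beta v & \frac{1}{\beta\gamma+1}\,[1-(\beta+\gamma)v]\end{pmatrix}. \]
   Context: A $2\times 2$ table is a point of the open probability simplex $\Delta=\{(p_{ij})\in\mathbb{A}^4: \sum p_{ij}=1,\ p_{ij}>0\}$. The odds ratios are $r_{||}=\frac{p_{00}p_{10}}{p_{01}p_{11}}$ and $r_==\frac{p_{00}p_{01}}{p_{10}p_{11}}$, written as $r_{||}=\beta^2$, $r_==\gamma^2$ with $\beta,\gamma>0$. *)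

(* Defs.v *)
From Stdlib Require Import Reals.
Open Scope R_scope.

Definition is_table (p00 p01 p10 p11 : R) : Prop :=
  0 < p00 /\ 0 < p01 /\ 0 < p10 /\ 0 < p11 /\ p00 + p01 + p10 + p11 = 1.

(* Main.v *)
Require Import Defs.
From Stdlib Require Import Reals Lra Psatz.
Open Scope R_scope.

Theorem proposition2p3 (beta gamma : R) (hb : 0 < beta) (hg : 0 < gamma)
  (p00 p01 p10 p11 : R) (hP : is_table p00 p01 p10 p11) :
  (p00 * p10 / (p01 * p11) = beta ^ 2 /\ p00 * p01 / (p10 * p11) = gamma ^ 2)
  <->
  (exists v : R, 0 < v /\ v < 1 / (beta + gamma) /\
     p00 = beta / (beta + 1 / gamma) * (1 - (beta + gamma) * v) /\
     p01 = gamma * v /\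
     p10 = beta * v /\
     p11 = 1 / (beta * gamma + 1) * (1 - (beta + gamma) * v)).
Proof.
  destruct hP as (h00 & h01 & h10 & h11 & hs).
  split.
  - intros [E1 E2].
    assert (H1 : p00 * p10 = beta ^ 2 * (p01 * p11)).
    { rewrite <- E1. field. lra. }
    assert (H2 : p00 * p01 = gamma ^ 2 * (p10 * p11)).
    { rewrite <- E2. field. lra. }
    assert (H3 : gamma ^ 2 * p10 ^ 2 = beta ^ 2 * p01 ^ 2).
    { apply (Rmult_eq_reg_r p11); [| lra].
      transitivity (p10 * (p00 * p01)); [rewrite H2; ring|].
      transitivity (p01 * (p00 * p10)); [ring|]. rewrite H1; ring. }
    assert (H4 : gamma * p10 = beta * p01).
    { assert ((gamma * p10 - beta * p01) * (gamma * p10 + beta * p01) = 0) by nra.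
      destruct (Rmult_integral _ _ H) as [H5|H5]; nra. }
    assert (H5 : p10 = beta * (p01 / gamma)).
    { apply (Rmult_eq_reg_l gamma); [| lra]. rewrite H4. field. lra. }
    assert (H6 : p00 = beta * gamma * p11).
    { apply (Rmult_eq_reg_r p10); [| lra]. rewrite H1, H5. field. lra. }
    exists (p01 / gamma).
    assert (Hv : 0 < p01 / gamma) by (apply Rdiv_lt_0_compat; lra).
    assert (H7 : 1 - (beta + gamma) * (p01 / gamma) = (beta * gamma + 1) * p11).
    { replace ((beta + gamma) * (p01 / gamma)) with (p10 + p01) by (rewrite H5; field; lra). nra. }
    assert (Hbg : 0 < beta * gamma) by nra.
    repeat split.
    + exact Hv.
    + assert (0 < 1 - (beta + gamma) * (p01 / gamma)) by nra.
      unfold Rdiv at 2. rewrite Rmult_1_l.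
      apply (Rmult_lt_reg_l (beta + gamma)); [lra|].
      rewrite Rinv_r; lra.
    + rewrite H7, H6. field. lra.
    + field. lra.
    + exact H5.
    + rewrite H7. field. lra.
  - intros (v & hv & hv2 & e00 & e01 & e10 & e11).
    assert (Hbg : 0 < beta * gamma) by nra.
    assert (Hw : 0 < 1 - (beta + gamma) * v).
    { apply (Rmult_lt_compat_l (beta + gamma)) in hv2; [|lra].
      replace ((beta + gamma) * (1 / (beta + gamma))) with 1 in hv2 by (field; lra). lra. }
    split.
    + rewrite e00, e01, e10, e11. field. repeat split; try lra; nra.
    + rewrite e00, e01, e10, e11. field. repeat split; try lra; nra.
Qed.
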